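(* Let $k\in\mathbb{Z}$ with $|k|\ge 2$ and $z\in\mathbb{C}\setminus\{0\}$. Then $$|W_k'(z)| \le \frac{1}{|z|}\frac{(2|k|-2)\pi}{(2|k|-2)\pi-1} \le \frac{1}{|z|}\frac{2\pi}{2\pi-1} \le \frac{1.2}{|z|}.$$ Also, if $k=1$ and $\operatorname{Im}(z)\ge 0$, or if $k=-1$ and $\operatorname{Im}(z)<0$, then $$|W_k'(z)| \le \frac{1}{|z|}\frac{\pi}{\pi-1}\le\frac{1.5}{|z|}.$$
   Context: $W_k$ denotes the $k$-th branch of the Lambert $W$ function (inverse of $w\mapsto we^w$) in the standard convention of Corless, Gonnet, Hare, Jeffrey and Knuth (1996); branches with $|k|\ge2$ have a branch cut on $(-\infty,0)$, $W_{\pm1}$ have cuts on $(-\infty,0)$ and, on one side, $(-1/e,0)$; on a branch cut the value is defined by continuity from the upper half plane. $W_k'$ denotes the derivative of the fixed branch $W_k$ (on a cut, the derivative of the branch continued from above, i.e. the directional derivative along the cut), and $W'(z)=\frac{1}{z}\frac{W(z)}{1+W(z)}$. *)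

(* Defs.v *)
From HB Require Import structures.
From Stdlib Require Import ClassicalEpsilon.
From mathcomp Require Import all_boot all_order all_algebra.
From mathcomp Require Import complex.
From mathcomp Require Import all_classical all_reals all_analysis.
Set Implicit Arguments. Unset Strict Implicit. Unset Printing Implicit Defensive.
Import Order.TTheory GRing.Theory Num.Theory.
Local Open Scope ring_scope.
Local Open Scope complex_scope.

Section Lambert.
Variable R : realType.

Definition cexp (w : R[i]) : R[i] :=
  (expR (complex.Re w) * cos (complex.Im w)) +i* (expR (complex.Re w) * sin (complex.Im w)).

(* xi(eta) := - eta cot eta : the curves {xi(eta) + i eta} are the images of
   the negative real axis, i.e. the boundaries between branch ranges. *)
Definition bcurve (eta : R) : R := - eta * cos eta / sin eta.

(* Range of the branch W_k (Corless-Gonnet-Hare-Jeffrey-Knuth 1996), with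
   the convention that on branch cuts values are continuous from above
   (upper boundary curve included, lower one excluded). w = xi + i eta. *)
Definition W_range (k : int) (w : R[i]) : Prop :=
  let xi := complex.Re w in let eta := complex.Im w in
  let kR : R := k%:~R in
  if (0 < k)%R then
    [/\ (2 * kR - 2) * pi < eta < (2 * kR + 1) * pi,
        eta < (2 * kR - 1) * pi -> xi < bcurve eta &
        2 * kR * pi < eta -> bcurve eta <= xi]
  else if (k < 0)%R then
    [/\ ((2 * kR - 1) * pi < eta < (2 * kR + 2) * pi
           \/ (k = -1 /\ eta = 0 /\ xi <= -1)),
        eta < 2 * kR * pi -> bcurve eta < xi &
        (2 * kR + 1) * pi < eta < (2 * kR + 2) * pi -> xi <= bcurve eta]
  else
    [/\ - pi < eta < pi,
        eta < 0 -> bcurve eta < xi,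
        eta = 0 -> -1 <= xi &
        0 < eta -> bcurve eta <= xi].

Definition LambertW (k : int) (z : R[i]) : R[i] :=
  epsilon (inhabits 0) (fun w => w * cexp w = z /\ W_range k w).

Definition LambertW' (k : int) (z : R[i]) : R[i] :=
  z^-1 * (LambertW k z / (1 + LambertW k z)).

End Lambert.

(* Main.v *)
Require Import Defs.
From HB Require Import structures.
From Stdlib Require Import ClassicalEpsilon.
From mathcomp Require Import all_boot all_order all_algebra.
From mathcomp Require Import complex.
From mathcomp Require Import all_classical all_reals all_analysis.
From mathcomp Require Import ring lra.
Import Order.TTheory GRing.Theory Num.Theory.
Import numFieldNormedType.Exports.
Local Open Scope ring_scope.
Local Open Scope complex_scope.

Set Implicit Arguments. Unset Strict Implicit. Unset Printing Implicit Defensive.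

Section S.
Variable R : realType.
Lemma cos32_gt0 : 0 < cos (3/2 : R).
Proof.
have h := @cvg_cos_coeff' R (3/2); rewrite -(cvg_lim (@Rhausdorff R) h).
apply: (@lt_trans _ _ (\sum_(0 <= i < 4) cos_coeff' (3/2 : R) i)).
  rewrite !big_nat_recr//= big_nil add0r /cos_coeff' -!exprnP.
  rewrite !exprS !expr0 /=.
  rewrite (_ : (0.*2)`! = 1)// (_ : (1.*2)`! = 2)// (_ : (2.*2)`! = 24)// (_ : (3.*2)`! = 720)//.
  lra.
apply: lt_sum_lim_series; [by move/cvgP in h|move=> d].
rewrite /cos_coeff' -!exprnP.
set n := (4 + d.*2)%N.
have -> : (4 + d.*2.+1)%N = n.+1 by rewrite /n addnS.
have e1 : (-1:R)^+n = 1 by rewrite -signr_odd /n oddD odd_double.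
have e2 : (-1:R)^+n.+1 = -1 by rewrite -signr_odd /n /= oddD odd_double.
rewrite e1 e2 doubleS.
set m := n.*2.
have m8 : (8 <= m)%N by rewrite /m /n doubleD.
clearbody m.
rewrite (factS m.+1) (factS m) !natrM (exprSr _ m.+1) (exprSr _ m).
set A := (3/2 : R)^+m; set F := (m`!)%:R; set a := (m.+2)%:R; set b := (m.+1)%:R.
have A0 : 0 < A by rewrite exprn_gt0.
have F0 : 0 < F by rewrite ltr0n fact_gt0.
have a10 : 10 <= a by rewrite (ler_nat R 10).
have b9 : 9 <= b by rewrite (ler_nat R 9).
have -> : 1 * A / F + -1 * (A * (3 / 2) * (3 / 2)) / (a * (b * F)) =
   (A / F) * (1 - (9/4) / (a * b)).
  by field; rewrite ?gt_eqF //; lra.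
have P0 : 0 < A / F by rewrite divr_gt0.
apply: mulr_gt0 => //.
rewrite subr_gt0 ltr_pdivrMr; first nra.
nra.
Qed.

Lemma pi_ge3 : 3 <= (pi : R).
Proof.
rewrite leNgt; apply/negP => hpi.
have h2 := @pi_ge2 R.
have H := @ltr_cos R (pi/2) (3/2).
rewrite !in_itv/= in H.
have a1 : 0 <= (pi : R) / 2 <= pi by apply/andP; split; lra.
have a2 : 0 <= (3 / 2 : R) <= pi by apply/andP; split; lra.
move: (H a1 a2); rewrite cos_pihalf; have -> : pi / 2 < 3 / 2 :> R by lra.
have := cos32_gt0; lra.
Qed.

Lemma mulcexp (x y : R) : (x +i* y) * cexp (x +i* y) =
  (expR x * (x * cos y - y * sin y)) +i* (expR x * (x * sin y + y * cos y)).
Proof. rewrite /cexp /=; congr (_ +i* _); ring. Qed.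

Lemma bound_q (w : R[i]) (A : R) : 1 < A -> A <= `|complex.Im w| ->
  Normc.normc (w / (1 + w)) <= A / (A - 1).
Proof.
move=> A1 Aw.
have hn : `|complex.Im w| <= Normc.normc w.
  case: w Aw => a b /= Aw; rewrite -sqrtr_sqr ler_sqrt ?addr_ge0 ?sqr_ge0 //.
  by rewrite lerDr sqr_ge0.
have hm : Normc.normc w <= Normc.normc (1 + w) + 1.
  have := le_normcD (1 + w) (-1); rewrite normcN Normc.normc1.
  by rewrite addrC addKr.
rewrite Normc.normcM Normc.normcV.
set n := Normc.normc w in hn hm *; set m := Normc.normc (1 + w) in hm *.
have m0 : 0 < m by lra.
set B := A / (A - 1).
have hB : (B - 1) * (A - 1) = 1 by rewrite /B; field; lra.
have B1 : 0 <= B - 1.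
  have : 0 < B by rewrite /B divr_gt0 //; lra.
  nra.
rewrite -/(n / m) ler_pdivrMr //.
have h1 : 0 <= (n - A) * (B - 1) by apply: mulr_ge0; lra.
have h2 : 0 <= B * (m - (n - 1)) by apply: mulr_ge0; lra.
nra.
Qed.

Lemma final_bound (z q : R[i]) (c : R) : Normc.normc q <= c ->
  `|z^-1 * q| <= (`|z|)^-1 * c%:C.
Proof.
move=> hq; rewrite normrM normfV ler_wpM2l ?invr_ge0 //.
by rewrite -[`|q|]/((Normc.normc q)%:C) lecR.
Qed.

End S.


Section S2.
Variable R : realType.

Definition mfun (c x : R) : R := (c - x) / sin x * expR ((c - x) * cos x / sin x).

Lemma mfun_cont c x : sin x != 0 -> {for x, continuous (mfun c)}.
Proof.
move=> sx.
have hs : {for x, continuous (fun y => (sin y)^-1)} := continuousV sx (@continuous_sin R x).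
have ht : {for x, continuous (cst c - id)} :=
  continuousB (@cst_continuous _ _ c x) (@cvg_id _ (nbhs x)).
have hc := @continuous_cos R x.
have := continuousM (continuousM ht hs)
  (continuous_comp (continuousM (continuousM ht hc) hs) (@continuous_expR R _)).
exact.
Qed.

Lemma small_sin (e : R) : 0 < e < 1 -> exists2 x, 0 < x < pi/2 & sin x = e.
Proof.
move=> /andP[e0 e1].
have pi2 : 0 <= (pi : R) / 2 by rewrite divr_ge0 // pi_ge0.
have [] := @IVT R sin 0 (pi/2) e pi2.
- by apply: continuous_subspaceT => y; exact: continuous_sin.
- rewrite sin0 sin_pihalf; apply/andP; split; [rewrite ge_min; apply/orP; left|rewrite le_max; apply/orP; right]; lra.
move=> x; rewrite in_itv /= => /andP[x0 x1] sx.
exists x => //; apply/andP; split.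
- rewrite lt_neqAle x0 andbT; apply/eqP => ex; move: sx; rewrite -ex sin0; lra.
- rewrite lt_neqAle x1 andbT; apply/eqP => ex; move: sx; rewrite ex sin_pihalf; lra.
Qed.

Lemma cos_small (x e : R) : 0 < x < pi/2 -> sin x = e -> e <= 1/2 -> 1/2 <= cos x.
Proof.
move=> /andP[x0 x1] sx e2.
have c0 : 0 < cos x.
  apply: cos_gt0_pihalf; apply/andP; split => //.
  apply: lt_trans x0; rewrite oppr_lt0 divr_gt0 // pi_gt0 //.
have c1 := cos_le1 x.
have := cos2sin2 x; rewrite sx => h.
have e0 : 0 <= e by rewrite -sx sin_ge0_pi //; apply/andP; split; [lra|]; have := @pi_gt0 R; lra.
nra.
Qed.

Lemma sin_pi_sub (x : R) : sin (pi - x) = sin x.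
Proof. by rewrite sinB sinpi cospi; ring. Qed.

Lemma cos_pi_sub (x : R) : cos (pi - x) = - cos x.
Proof. by rewrite cosB sinpi cospi; ring. Qed.

End S2.
Arguments mfun {R}.


Section S4.
Variable R : realType.

Lemma core (c r : R) : pi < c -> 0 < r -> exists2 x, 0 < x < pi & mfun c x = r.
Proof.
move=> cpi r0.
have pi3 := @pi_ge3 R.
have e1 : 0 < 1 / (r + 2) < 1.
  apply/andP; split; first by rewrite divr_gt0 //; lra.
  by rewrite ltr_pdivrMr; lra.
have [x1 hx1 sx1] := small_sin e1.
have m1 : r <= mfun c x1.
  move: (hx1) => /andP[x10 x11].
  have cx : 1/2 <= cos x1.
    apply: (cos_small hx1 sx1); rewrite ler_pdivrMr; lra.
  rewrite /mfun sx1.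
  set t := c - x1.
  have t1 : 1 <= t by rewrite /t; lra.
  set E := expR _.
  have E1 : 1 <= E.
    rewrite /E (le_trans _ (expR_ge1Dx _)) // lerDl.
    rewrite divr_ge0 //; last by rewrite divr_ge0 //; lra.
    apply: mulr_ge0; lra.
  have -> : t / (1 / (r + 2)) = t * (r + 2) by field; lra.
  have h1 : r + 2 <= t * (r + 2) by nra.
  have h2 : 0 <= t * (r + 2) * (E - 1) by apply: mulr_ge0; nra.
  nra.
set t0 := c - pi.
have t00 : 0 < t0 by rewrite /t0; lra.
have c0 : 0 < c by lra.
set d := r * t0 ^+ 2 / (8 * c).
have d0 : 0 < d by rewrite /d divr_gt0 //; [rewrite mulr_gt0 // exprn_gt0 | lra].
set e := d / (1 + 2 * d).
have ed : e <= d by rewrite /e ler_pdivrMr; nra.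
have e0 : 0 < e by rewrite /e divr_gt0 //; lra.
have eh : e < 1/2 by rewrite /e ltr_pdivrMr; lra.
have e2 : 0 < e < 1 by apply/andP; split; lra.
have [x2 hx2 sx2] := small_sin e2.
have m2 : mfun c (pi - x2) <= r.
  move: (hx2) => /andP[x20 x21].
  have cx : 1/2 <= cos x2 by apply: (cos_small hx2 sx2); lra.
  rewrite /mfun sin_pi_sub cos_pi_sub sx2.
  set t := c - (pi - x2).
  have tt0 : t0 <= t by rewrite /t /t0; lra.
  have tc : t <= c by rewrite /t; lra.
  set y := t * cos x2 / e.
  have -> : t * - cos x2 / e = - y by rewrite /y; field; lra.
  rewrite expRN.
  have ye : t0 / 2 <= y * e.
    have -> : y * e = t * cos x2 by rewrite /y; field; lra.
    nra.
  have Ey : 1 + y ^+ 2 / 2 <= expR y.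
    have := @expR_ge1Dxn R y 1%N; rewrite /= (_ : (2`!)%:R = 2 :> R) //; apply.
    have : 0 <= y * e by lra.
    by rewrite pmulr_lge0.
  have E0 := expR_gt0 y.
  rewrite -mulrA -invfM ler_pdivrMr; last by apply: mulr_gt0.
  have dc : d * c = r * t0 ^+ 2 / 8 by rewrite /d; field; lra.
  suff : t * e <= r * e * (e * expR y) by move=> h; nra.
  have h1 : r * t0 ^+ 2 / 8 <= r * e * e * (y ^+ 2 / 2).
    have : t0 ^+ 2 / 4 <= (y * e) ^+ 2.
      have : 0 <= t0 / 2 by lra.
      nra.
    nra.
  have h2 : r * e * e * (y ^+ 2 / 2) <= r * e * (e * expR y).
    have : 0 <= r * e * e by nra.
    nra.
  nra.
move: (hx1) (hx2) => /andP[x10 x11] /andP[x20 x21].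
have x12 : x1 <= pi - x2 by lra.
have [] := @IVT R (mfun c) x1 (pi - x2) r x12.
- apply: continuous_in_subspaceT => x; rewrite inE /= in_itv /= => /andP[a b].
  apply: mfun_cont; rewrite gt_eqF //; apply: sin_gt0_pi; apply/andP; split; lra.
- apply/andP; split; [rewrite ge_min; apply/orP; right|rewrite le_max; apply/orP; left] => //.
move=> x; rewrite in_itv /= => /andP[a b] mx.
exists x => //; apply/andP; split; lra.
Qed.

End S4.


Section S5.
Variable R : realType.

Lemma two_n_pi (n : nat) : 2 * n%:R * pi = (pi *+ 2) *+ n :> R.
Proof. by rewrite -[(pi *+ 2) *+ n]mulr_natr -mulr_natr; ring. Qed.

Lemma sin_shift (u : R) (n : nat) : sin (u + 2 * n%:R * pi) = sin u.
Proof. by rewrite two_n_pi (periodicn (@sinD2pi R)). Qed.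

Lemma cos_shift (u : R) (n : nat) : cos (u + 2 * n%:R * pi) = cos u.
Proof. by rewrite two_n_pi (periodicn (@cosD2pi R)). Qed.

Lemma sin_le0 (x : R) : - pi <= x <= 0 -> sin x <= 0.
Proof.
move=> /andP[a b]; have : 0 <= sin (- x) by apply: sin_ge0_pi; apply/andP; split; lra.
rewrite sinN; lra.
Qed.

Lemma sin_lt0 (x : R) : - pi < x < 0 -> sin x < 0.
Proof.
move=> /andP[a b]; have : 0 < sin (- x) by apply: sin_gt0_pi; apply/andP; split; lra.
rewrite sinN; lra.
Qed.

Lemma branch_sol (K : nat) (th r : R) : (1 <= K)%N -> -pi <= th <= pi -> 0 < r ->
  pi < th + 2 * K%:R * pi ->
  exists xi eta : R, [/\ expR xi * (xi * cos eta - eta * sin eta) = r * cos th,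
     expR xi * (xi * sin eta + eta * cos eta) = r * sin th,
     (2 * K%:R - 2) * pi < eta < (2 * K%:R + 1) * pi,
     (eta < (2 * K%:R - 1) * pi -> xi <= bcurve eta /\ (-pi < th -> xi < bcurve eta)) &
     (2 * K%:R * pi < eta -> bcurve eta <= xi /\ (th < pi -> bcurve eta < xi))].
Proof.
case: K => [//|K'] _ /andP[th1 th2] r0 cpi.
have hK : (K'.+1)%:R = K'%:R + 1 :> R by rewrite natr1.
have pi3 := @pi_ge3 R.
set c := th + 2 * (K'.+1)%:R * pi in cpi *.
have [phi /andP[p0 p1] mphi] := core cpi r0.
have sp : 0 < sin phi by apply: sin_gt0_pi; apply/andP; split; lra.
set t := c - phi in mphi *.
set xi := t * cos phi / sin phi in mphi *.
have cc : cos c = cos th by rewrite /c cos_shift.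
have sc : sin c = sin th by rewrite /c sin_shift.
have ptc : phi + t = c by rewrite /t; ring.
have spn : sin phi != 0 by rewrite gt_eqF.
exists xi, t; split.
- have -> : xi * cos t - t * sin t = t / sin phi * cos (phi + t).
    by rewrite [cos (phi + t)]cosD /xi; field.
  by rewrite ptc cc -mphi /mfun -/t -/xi; ring.
- have -> : xi * sin t + t * cos t = t / sin phi * sin (phi + t).
    by rewrite [sin (phi + t)]sinD /xi; field.
  by rewrite ptc sc -mphi /mfun -/t -/xi; ring.
- apply/andP; split; rewrite /t /c; lra.
- move=> tlt.
  have tgt : (2 * (K'.+1)%:R - 2) * pi < t by rewrite /t /c; lra.
  have st : 0 < sin t.
    have -> : t = (t - 2 * K'%:R * pi) + 2 * K'%:R * pi by ring.
    rewrite sin_shift; apply: sin_gt0_pi; apply/andP; split; lra.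
  have key : (xi - bcurve t) * (sin phi * sin t) = t * sin th.
    by rewrite /bcurve -sc -ptc [sin (phi + t)]sinD /xi; field; rewrite gt_eqF.
  have P0 : 0 < sin phi * sin t by apply: mulr_gt0.
  have t0 : 0 < t by lra.
  have thn : th < 0 by move: tlt; rewrite /t /c; lra.
  split.
  + have : sin th <= 0 by apply: sin_le0; apply/andP; split; lra.
    nra.
  + move=> thp; have : sin th < 0 by apply: sin_lt0; apply/andP; split; lra.
    nra.
- move=> tgt.
  have tlt : t < (2 * (K'.+1)%:R + 1) * pi by rewrite /t /c; lra.
  have st : 0 < sin t.
    have -> : t = (t - 2 * (K'.+1)%:R * pi) + 2 * (K'.+1)%:R * pi by ring.
    rewrite sin_shift; apply: sin_gt0_pi; apply/andP; split; lra.
  have key : (xi - bcurve t) * (sin phi * sin t) = t * sin th.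
    by rewrite /bcurve -sc -ptc [sin (phi + t)]sinD /xi; field; rewrite gt_eqF.
  have P0 : 0 < sin phi * sin t by apply: mulr_gt0.
  have t0 : 0 < t by lra.
  have thp : 0 < th by move: tgt; rewrite /t /c; lra.
  split.
  + have : 0 <= sin th by apply: sin_ge0_pi; apply/andP; split; lra.
    nra.
  + move=> thp'; have : 0 < sin th by apply: sin_gt0_pi; apply/andP; split; lra.
    nra.
Qed.

End S5.


Section S6.
Variable R : realType.

Lemma polar (z : R[i]) : z != 0 -> exists th : R,
  [/\ -pi < th <= pi,
      z = (Normc.normc z * cos th) +i* (Normc.normc z * sin th),
      (complex.Im z < 0 -> th < 0) & (0 <= complex.Im z -> 0 <= th)].
Proof.
case: z => x y /= z0.
set r := Num.sqrt (x ^+ 2 + y ^+ 2).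
have s0 : 0 <= x ^+ 2 + y ^+ 2 by rewrite addr_ge0 ?sqr_ge0.
have r2 : r ^+ 2 = x ^+ 2 + y ^+ 2 by rewrite /r sqr_sqrtr.
have r0 : 0 < r.
  rewrite /r sqrtr_gt0 lt_neqAle s0 andbT eq_sym.
  apply: contra z0; rewrite paddr_eq0 ?sqr_ge0 // !sqrf_eq0 => /andP[/eqP -> /eqP ->].
  by [].
have rge : 0 <= r by lra.
set u := x / r.
have xr : x ^+ 2 <= r ^+ 2 by rewrite r2 lerDl sqr_ge0.
have u1 : -1 <= u <= 1.
  have : `|x| <= r by rewrite -(ger0_norm rge) -ler_sqr ?normr_ge0 // !real_normK ?num_real.
  rewrite ler_norml => /andP[a b]; rewrite /u.
  by apply/andP; split; [rewrite ler_pdivlMr // | rewrite ler_pdivrMr //]; lra.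
have [a0 api] := acos_def u1.
move/andP: a0 => [a0 api'].
have hs : sin (acos u) = `|y| / r.
  rewrite sin_acos // -(ger0_norm rge) -normf_div -sqrtr_sqr; congr Num.sqrt.
  rewrite /u !expr_div_n (_ : y ^+ 2 = r ^+ 2 - x ^+ 2); last by rewrite r2; ring.
  by field; rewrite gt_eqF //.
have hc : cos (acos u) = u by [].
have ry : y ^+ 2 <= r ^+ 2 by rewrite r2 lerDr sqr_ge0.
have [y0|y0] := leP 0 y.
- exists (acos u); split.
  + apply/andP; split => //; have := @pi_gt0 R; lra.
  + rewrite hc hs ger0_norm // /u; congr (_ +i* _); field; rewrite gt_eqF //.
  + by [].
  + by move=> _.
- have yn : y != 0 by rewrite lt_eqF.
  have ux : x ^+ 2 < r ^+ 2 by rewrite r2 ltrDl lt_neqAle eq_sym sqrf_eq0 yn sqr_ge0.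
  have u2 : -1 < u < 1.
    have : `|x| < r by rewrite -(ger0_norm rge) -ltr_sqr ?normr_ge0 // !real_normK ?num_real.
    rewrite ltr_norml => /andP[a b]; rewrite /u.
    by apply/andP; split; [rewrite ltr_pdivlMr // | rewrite ltr_pdivrMr //]; lra.
  have ag : 0 < acos u by apply: acos_gt0; move/andP: u2 => [? ?]; apply/andP; split; lra.
  have al : acos u < pi by apply: acos_ltpi; move/andP: u2 => [? ?]; apply/andP; split; lra.
  exists (- acos u); split.
  + apply/andP; split; lra.
  + rewrite cosN sinN hc hs ltr0_norm // /u; congr (_ +i* _); field; rewrite gt_eqF //.
  + move=> _; lra.
  + by [].
Qed.
End S6.


Section S7.
Variable R : realType.

Lemma bcurveN (x : R) : bcurve (- x) = bcurve x.
Proof. by rewrite /bcurve cosN sinN invrN; ring. Qed.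

Lemma exists_W (k : int) (z : R[i]) : z != 0 -> k != 0 -> (k = -1 -> complex.Im z < 0) ->
  exists w, w * cexp w = z /\ W_range k w.
Proof.
move=> z0 k0 km1.
have [th [/andP[th1 th2] zE thn thp]] := polar z0.
set r := Normc.normc z in zE.
have r0 : 0 < r.
  rewrite /r lt_neqAle eq_sym; apply/andP; split.
    by apply: contra z0 => /eqP/Normc.eq0_normc ->.
  by case: (z) => a b /=; rewrite sqrtr_ge0.
have pi3 := @pi_ge3 R.
move: k0 km1; case: k => [K|n] k0 km1.
- have K1 : (1 <= K)%N by move: k0; rewrite lt0n.
  have K1' : 1 <= K%:R :> R by rewrite ler1n.
  have thb : - pi <= th <= pi by apply/andP; split; lra.
  have cpi : pi < th + 2 * K%:R * pi.
    have : 0 <= (K%:R - 1 : R) * pi by apply: mulr_ge0; lra.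
    nra.
  have [xi [eta [E1 E2 R1 R2 R3]]] := branch_sol K1 thb r0 cpi.
  exists (xi +i* eta); split.
    by rewrite mulcexp E1 E2 zE.
  rewrite /W_range /=.
  have -> : (0 < Posz K)%R = true by rewrite ltz_nat.
  change ((Posz K)%:~R : R) with (K%:R : R).
  split => //.
  + by move=> h; case: (R2 h) => _; apply.
  + by move=> h; case: (R3 h).
- clear k0; set K := n.+1.
  have K1 : (1 <= K)%N by [].
  have K1' : 1 <= K%:R :> R by rewrite ler1n.
  have thl : - th < pi.
    case: n km1 @K K1 K1' => [|n] km1 K K1 K1'.
    + by have := thn (km1 erefl); lra.
    + lra.
  have cpi : pi < - th + 2 * K%:R * pi.
    case: n km1 @K K1 K1' thl => [|n] km1 K K1 K1' thl.
    + by have := thn (km1 erefl); rewrite /K; lra.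
    + have : 2 <= K%:R :> R by rewrite /K ler_nat.
      move=> h; have : 0 <= (K%:R - 2 : R) * pi by apply: mulr_ge0; lra.
      nra.
  have thb : - pi <= - th <= pi by apply/andP; split; lra.
  have [xi [eta [E1 E2 R1 R2 R3]]] := branch_sol K1 thb r0 cpi.
  exists (xi +i* (- eta)); split.
    rewrite mulcexp cosN sinN zE.
    rewrite cosN sinN in E1 E2.
    congr (_ +i* _).
    + by rewrite -E1; ring.
    + have -> : r * sin th = - (r * - sin th) by ring.
      rewrite -E2; ring.
  rewrite /W_range /=.
  change ((Negz n)%:~R : R) with (- (K%:R) : R).
  split.
  + left; move/andP: R1 => [a b]; apply/andP; split; lra.
  + move=> h; rewrite bcurveN; apply: (R3 _).2; lra.
  + move=> /andP[a b]; rewrite bcurveN; apply: (R2 _).1; lra.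
Qed.

End S7.


Section S8.
Variable R : realType.

Lemma W_spec (k : int) (z : R[i]) : z != 0 -> k != 0 -> (k = -1 -> complex.Im z < 0) ->
  LambertW k z * cexp (LambertW k z) = z /\ W_range k (LambertW k z).
Proof.
move=> z0 k0 km1; rewrite /LambertW.
apply: (@epsilon_spec _ _ (fun w => w * cexp w = z /\ W_range k w)); exact: exists_W.
Qed.

Lemma frac_mono (a b : R) : 1 < b -> b <= a -> a / (a - 1) <= b / (b - 1).
Proof.
move=> b1 ba; rewrite ler_pdivrMr; last lra.
rewrite mulrAC ler_pdivlMr; last lra.
nra.
Qed.

Lemma im_bound_big (k : int) (w : R[i]) : (2 <= `|k|)%R -> W_range k w ->
  (2 * `|k|%:~R - 2) * pi <= `|complex.Im w|.
Proof.
case: k => [K|n] hk; rewrite /W_range /=.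
- have -> : (0 < Posz K)%R = true by rewrite ltz_nat; case: K hk.
  change ((Posz K)%:~R : R) with (K%:R : R).
  case => /andP[a _] _ _.
  change (`|Posz K|) with (Posz K); change ((Posz K)%:~R : R) with (K%:R : R).
  by rewrite (le_trans (ltW a)) // ler_norm.
-   change (`|Negz n|) with (Posz n.+1) in hk |- *.
  change ((Posz n.+1)%:~R : R) with (n.+1%:R : R).
  change ((Negz n)%:~R : R) with (- (n.+1%:R) : R).
  case => [[/andP[_ a]|[hn _]] _ _]; last first.
    by move: hk; case: n hn.
  have : 2 <= n.+1%:R :> R by rewrite ler_nat.
  move=> h2; rewrite ler_normr; apply/orP; right; lra.
Qed.


Lemma bcurve_sin (x : R) : sin x != 0 -> bcurve x * sin x = - x * cos x.
Proof. by move=> s0; rewrite /bcurve; field. Qed.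

Lemma im_bound_k1 (w z : R[i]) : w * cexp w = z -> W_range 1 w ->
  0 <= complex.Im z -> pi <= `|complex.Im w|.
Proof.
case: w => xi eta; rewrite mulcexp => <- /=; rewrite /W_range /=.
case => /andP[a b] h1 _ hz.
have E0 := expR_gt0 xi.
have pi3 := @pi_ge3 R.
suff : pi <= eta by move=> h; rewrite (le_trans h) // ler_norm.
rewrite leNgt; apply/negP => he.
have e0 : 0 < eta by lra.
have se : 0 < sin eta by apply: sin_gt0_pi; apply/andP; split.
have := h1 ltac:(lra); rewrite -(ltr_pM2r se) bcurve_sin ?gt_eqF // => h.
nra.
Qed.

Lemma im_bound_km1 (w z : R[i]) : w * cexp w = z -> W_range (-1) w ->
  complex.Im z < 0 -> pi <= `|complex.Im w|.
Proof.
case: w => xi eta; rewrite mulcexp => <- /=; rewrite /W_range /=.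
case => h0 _ h2 hz.
have E0 := expR_gt0 xi.
have pi3 := @pi_ge3 R.
suff : eta <= - pi by move=> h; rewrite ler_normr; apply/orP; right; lra.
rewrite leNgt; apply/negP => he.
case: h0 => [/andP[a b]|[_ [e0 _]]]; last first.
  by move: hz; rewrite e0 sin0 cos0; lra.
have se : sin eta < 0 by apply: sin_lt0; apply/andP; split; lra.
have := h2 ltac:(apply/andP; split; lra) => h.
have : bcurve eta * sin eta <= xi * sin eta by nra.
rewrite bcurve_sin ?lt_eqF // => h'.
nra.
Qed.

End S8.


Unset Implicit Arguments.
Theorem theorem3 (R : realType) :
  (forall (k : int) (z : R[i]), (2 <= `|k|)%R -> z != 0 ->
     let a : R := (2 * `|k|%:~R - 2) * pi in
     [/\ `|LambertW' k z| <= (`|z|)^-1 * (a / (a - 1))%:C,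
         (`|z|)^-1 * (a / (a - 1))%:C <= (`|z|)^-1 * (2 * pi / (2 * pi - 1))%:C &
         (`|z|)^-1 * (2 * pi / (2 * pi - 1))%:C <= (`|z|)^-1 * (6 / 5)%:C])
  /\
  (forall (k : int) (z : R[i]), z != 0 ->
     ((k = 1 /\ 0 <= complex.Im z) \/ (k = -1 /\ complex.Im z < 0)) ->
     `|LambertW' k z| <= (`|z|)^-1 * (pi / (pi - 1))%:C
     /\ (`|z|)^-1 * (pi / (pi - 1))%:C <= (`|z|)^-1 * (3 / 2)%:C).
Proof.
have pi3 := @pi_ge3 R.
have zinv (z : R[i]) : 0 <= (`|z|)^-1 by rewrite invr_ge0.
split.
- move=> k z hk z0 a.
  have k0 : k != 0 by apply: contraTneq hk => ->.
  have km1 : k = -1 -> complex.Im z < 0 by move=> e; move: hk; rewrite e.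
  have [_ HR] := W_spec z0 k0 km1.
  have hIm := im_bound_big hk HR.
  have K2 : 2 <= `|k|%:~R :> R by move: hk; rewrite -(ler_int R).
  have a2 : 2 * pi <= a.
    rewrite /a; have : 0 <= (`|k|%:~R - 2 : R) * pi by apply: mulr_ge0; lra.
    nra.
  split.
  + rewrite /LambertW'; apply: final_bound; apply: bound_q => //; lra.
  + rewrite ler_wpM2l // lecR; apply: frac_mono; lra.
  + rewrite ler_wpM2l // lecR ler_pdivrMr; lra.
- move=> k z z0 hk.
  have k0 : k != 0 by case: hk => [[-> _]|[-> _]].
  have km1 : k = -1 -> complex.Im z < 0.
    by case: hk => [[-> _] //|[_ h] _].
  have [HW HR] := W_spec z0 k0 km1.
  have hIm : pi <= `|complex.Im (LambertW k z)|.
    case: hk => [[ek hz]|[ek hz]]; subst k.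
    + exact: im_bound_k1 HW HR hz.
    + exact: im_bound_km1 HW HR hz.
  split.
  + rewrite /LambertW'; apply: final_bound; apply: bound_q => //; lra.
  + rewrite ler_wpM2l // lecR ler_pdivrMr; lra.
Qed.
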